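(* Let $P$ be a finite poset and $Q$ a poset ideal of $P$. Then the natural inclusion $\Delta(P)\subseteq\Delta(P\uplus Q)$ makes the geometric realization of $\Delta(P)$ a deformation retract of that of $\Delta(P\uplus Q)$. In particular, for any field $k$ and every $i$, the induced maps $\tilde H^i(\Delta(P\uplus Q);k)\to\tilde H^i(\Delta(P);k)$ are isomorphisms.
   Context: $\Delta(\cdot)$ denotes the order complex (simplicial complex of chains). A poset ideal $Q$ of $P$ is a subset with $x\in Q$, $y<x$ implying $y\in Q$. The poset $P\uplus Q$ has underlying set $P\cup Q^\ast$, $Q^\ast=\{x^\ast:x\in Q\}$ a disjoint copy of $Q$, with $\alpha<\beta$ iff either $\alpha,\beta\in P$ and $\alpha<\beta$ in $P$; or $\alpha=x^\ast,\beta=y^\ast$ with $x<y$ in $P$; or $\alpha=x^\ast$ with $x\in Q$, $\beta\in P$ and $x\le\beta$ in $P$. *)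

(* Defs.v *)
From HB Require Import structures.
From mathcomp Require Import all_boot all_order all_algebra.
From mathcomp Require Import reals.
Set Implicit Arguments. Unset Strict Implicit. Unset Printing Implicit Defensive.
Import Order.TTheory GRing.Theory Num.Theory.
Local Open Scope ring_scope.

Definition poset_ideal (d : Order.disp_t) (T : finPOrderType d) (Q : {set T}) :=
  forall x y : T, x \in Q -> (y < x)%O -> y \in Q.

(* P ⊎ Q is modelled on the finite type T + T: inl x is x ∈ P, inr x is x^*.
   Its underlying set is {inl x | x ∈ P} ∪ {inr x | x ∈ Q}. *)
Definition uplus_ground (d : Order.disp_t) (T : finPOrderType d) (Q : {set T})
  : {set T + T} :=
  [set v | match v with inl _ => true | inr x => x \in Q end].

Definition uplus_lt (d : Order.disp_t) (T : finPOrderType d) (Q : {set T})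
  (a b : T + T) : bool :=
  match a, b with
  | inl x, inl y => (x < y)%O
  | inr x, inr y => [&& x \in Q, y \in Q & (x < y)%O]
  | inr x, inl y => (x \in Q) && (x <= y)%O
  | inl _, inr _ => false
  end.

(* Order complex of the strict order [lt] on the ground set [S]: all chains
   (including the empty chain, used for reduced cohomology). *)
Definition order_complex (V : finType) (lt : rel V) (S : {set V})
  : {set {set V}} :=
  [set s : {set V} | (s \subset S) &&
     [forall x in s, forall y in s, [|| x == y, lt x y | lt y x]]].

Definition Delta_P (d : Order.disp_t) (T : finPOrderType d) : {set {set T}} :=
  order_complex (fun x y : T => (x < y)%O) [set: T].

Definition Delta_PuQ (d : Order.disp_t) (T : finPOrderType d) (Q : {set T})
  : {set {set T + T}} :=
  order_complex (uplus_lt Q) (uplus_ground Q).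

(* |K| ⊆ R^V : barycentric-coordinate points whose support is a simplex of K. *)
Definition realization (R : realType) (V : finType) (K : {set {set V}})
  (x : V -> R) : Prop :=
  (forall v, 0 <= x v) /\ \sum_(v : V) x v = 1 /\ [set v | x v != 0] \in K.

Definition incl_real (R : realType) (T : finType) (x : T -> R) : T + T -> R :=
  fun v => match v with inl t => x t | inr _ => 0 end.

(* Continuity on a subset D of R × R^V (with the subspace topology of the
   usual topology of R × R^V), of a map into R^W, in epsilon-delta form. *)
Definition continuous_on (R : realType) (V W : finType)
  (D : R -> (V -> R) -> Prop) (H : R -> (V -> R) -> W -> R) : Prop :=
  forall t x, D t x -> forall e : R, 0 < e ->
    exists2 dl : R, 0 < dl &
      forall s y, D s y -> `|s - t| < dl -> (forall v, `|y v - x v| < dl) ->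
        forall w, `|H s y w - H t x w| < e.

(* Cochains are functions on vertex sets; an i-cochain only matters on the
   simplices with i+1 vertices (the empty simplex has degree -1, giving the
   reduced complex).  Simplices of an order complex are chains, oriented by
   the order [lt]. *)

Definition csign (k : fieldType) (V : finType) (lt : rel V) (s : {set V}) (v : V)
  : k := (-1) ^+ #|[set w in s | lt w v]|.

Definition coboundary_map (k : fieldType) (V : finType) (lt : rel V)
  (f : {set V} -> k) (s : {set V}) : k :=
  \sum_(v in s) csign k lt s v * f (s :\ v).

Definition is_cocycle (k : fieldType) (V : finType) (lt : rel V)
  (K : {set {set V}}) (i : int) (f : {set V} -> k) : Prop :=
  forall s, s \in K -> (#|s|%:Z = i + 2)%R -> coboundary_map lt f s = 0.

Definition is_coboundary (k : fieldType) (V : finType) (lt : rel V)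
  (K : {set {set V}}) (i : int) (f : {set V} -> k) : Prop :=
  exists g : {set V} -> k,
    forall s, s \in K -> (#|s|%:Z = i + 1)%R -> f s = coboundary_map lt g s.

Definition restr_cochain (k : fieldType) (T : finType) (f : {set T + T} -> k)
  : {set T} -> k := fun s => f (inl @: s).

Definition restr_iso_on_cohomology (k : fieldType) (T : finType)
  (ltP : rel T) (KP : {set {set T}}) (ltB : rel (T + T)) (KB : {set {set T + T}})
  (i : int) : Prop :=
  (forall f : {set T + T} -> k, is_cocycle ltB KB i f ->
     is_coboundary ltP KP i (restr_cochain f) -> is_coboundary ltB KB i f) /\
  (forall g : {set T} -> k, is_cocycle ltP KP i g ->
     exists2 f : {set T + T} -> k, is_cocycle ltB KB i f &
       is_coboundary ltP KP i (fun s => g s - restr_cochain f s)).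

(* Main.v *)
Require Import Defs.
From HB Require Import structures.
From mathcomp Require Import all_boot all_order all_algebra.
From mathcomp Require Import reals.
From mathcomp Require Import zify ring lra.
From Stdlib Require Import FunctionalExtensionality.
Set Implicit Arguments. Unset Strict Implicit. Unset Printing Implicit Defensive.
Import Order.TTheory GRing.Theory Num.Theory.
Local Open Scope ring_scope.


Section Cohom.
Variables (k : fieldType) (V : finType) (lt : rel V).
Hypothesis lt_asym : forall a b, lt a b -> lt b a -> False.

Lemma lt_irr a : lt a a = false.
Proof. by apply/negbTE/negP => h; apply: (lt_asym h h). Qed.

Definition chainP (s : {set V}) :=
  forall a b, a \in s -> b \in s -> a != b -> lt a b || lt b a.

Lemma csignU1 (s : {set V}) (x v : V) : x \notin s ->
  csign k lt (x |: s) v = (-1) ^+ lt x v * csign k lt s v.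
Proof.
move=> xs; rewrite /csign.
have -> : [set w in x |: s | lt w v] =
   if lt x v then x |: [set w in s | lt w v] else [set w in s | lt w v].
  apply/setP => z; case hx: (lt x v); rewrite !inE;
  case: (eqVneq z x) => [->|nz] /=; rewrite ?hx ?(negbTE xs) //.
case: (lt x v); last by rewrite expr0 mul1r.
by rewrite cardsU1 inE (negbTE xs) /= add1n exprS expr1.
Qed.

Lemma csign_sq (s : {set V}) (v : V) : csign k lt s v * csign k lt s v = 1.
Proof. by rewrite /csign -expr2 sqrr_sign. Qed.

Lemma csignD1 (s : {set V}) (x v : V) : x \in s ->
  csign k lt s v = (-1) ^+ lt x v * csign k lt (s :\ x) v.
Proof.
by move=> xs; rewrite -{1}(setD1K xs) csignU1 // !inE eqxx.
Qed.

Lemma cobD (f g : {set V} -> k) (s : {set V}) : coboundary_map lt (fun t => f t + g t) s =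
  coboundary_map lt f s + coboundary_map lt g s.
Proof. by rewrite /coboundary_map -big_split; apply: eq_bigr => v _; rewrite mulrDr. Qed.

Lemma cobB (f g : {set V} -> k) (s : {set V}) : coboundary_map lt (fun t => f t - g t) s =
  coboundary_map lt f s - coboundary_map lt g s.
Proof. by rewrite /coboundary_map -sumrB; apply: eq_bigr => v _; rewrite mulrBr. Qed.

Lemma cob0 (s : {set V}) : coboundary_map lt (fun _ => 0 : k) s = 0.
Proof. by rewrite /coboundary_map big1 // => v _; rewrite mulr0. Qed.

Lemma split_lt (s : {set V}) (v : V) (F : V -> k) : chainP s -> v \in s ->
  \sum_(w in s :\ v) F w =
  \sum_(w in s) (if lt v w then F w else 0) + \sum_(w in s) (if lt w v then F w else 0).
Proof.
move=> ch vs; rewrite -!big_mkcondr (bigID (fun w => lt v w)) /=; congr (_ + _).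
  apply: eq_bigl => w; rewrite !inE; case: (eqVneq w v) => [->|]; rewrite ?lt_irr ?andbF //.
apply: eq_bigl => w; rewrite !inE; case: (eqVneq w v) => [->|nv] /=; rewrite ?lt_irr ?andbF //.
case ws: (w \in s) => //=.
case h1: (lt v w); case h2: (lt w v) => //=.
  by case: (lt_asym h1 h2).
by move: (ch _ _ ws vs nv); rewrite h1 h2.
Qed.

Lemma dd0 (f : {set V} -> k) (s : {set V}) : chainP s ->
  coboundary_map lt (coboundary_map lt f) s = 0.
Proof.
move=> ch; rewrite /coboundary_map.
set a := fun v w => csign k lt s v * (csign k lt (s :\ v) w * f (s :\ v :\ w)).
have -> : \sum_(v in s) csign k lt s v *
    (\sum_(w in s :\ v) csign k lt (s :\ v) w * f (s :\ v :\ w)) =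
  \sum_(v in s) (\sum_(w in s) (if lt v w then a v w else 0) +
                 \sum_(w in s) (if lt w v then a v w else 0)).
  apply: eq_bigr => v vs; rewrite big_distrr /=.
  by rewrite (split_lt (fun w => a v w) ch vs).
rewrite big_split /= [X in _ + X]exchange_big /= -big_split /=.
apply: big1 => v vs; rewrite -big_split /=; apply: big1 => w ws.
case: ifP => [hvw|]; last by rewrite addr0.
have nwv : lt w v = false by apply/negbTE/negP => h; apply: (lt_asym hvw h).
rewrite /a.
have wv : w != v by apply/eqP => e; move: hvw; rewrite e lt_irr.
rewrite (csignD1 w vs) (csignD1 v ws) nwv hvw expr0 mul1r expr1.
have -> : s :\ w :\ v = s :\ v :\ w.
  by apply/setP => z; rewrite !inE; case: (z == v); case: (z == w).
idtac.
ring.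
Qed.

Section Step.
Variables (K1 K2 : {set {set V}}) (p u : V).
Hypothesis HK1sub : forall s t : {set V}, s \in K1 -> t \subset s -> t \in K1.
Hypothesis HK1ch : forall s : {set V}, s \in K1 -> chainP s.
Hypothesis Hcone : forall s : {set V}, s \in K1 -> p \in s -> u |: s \in K1.
Hypothesis HK2 : forall s : {set V}, (s \in K2) = (s \in K1) && (p \notin s).
Hypothesis Hpu : p != u.

Lemma auxeq (a b c d e : k) : a + c * e = 0 -> a + (b + c * (d + e)) = b + c * d.
Proof. by move=> h; rewrite mulrDr -[RHS]addr0 -h; ring. Qed.

Definition Kop (f : {set V} -> k) (s : {set V}) : k :=
  if (p \in s) && (u \notin s) then csign k lt (u |: s) u * f (u |: s) else 0.

Lemma Kop_out (f : {set V} -> k) (s : {set V}) : p \notin s -> Kop f s = 0.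
Proof. by rewrite /Kop => /negbTE ->. Qed.

Lemma cobKop_out (f : {set V} -> k) (s : {set V}) : p \notin s -> coboundary_map lt (Kop f) s = 0.
Proof.
move=> ps; rewrite /coboundary_map big1 // => w ws.
by rewrite Kop_out ?mulr0 // !inE negb_and ps orbT.
Qed.

Lemma idA (f : {set V} -> k) (s : {set V}) : p \in s -> u \in s -> coboundary_map lt (Kop f) s = f s.
Proof.
move=> ps us; rewrite /coboundary_map (bigD1 u) //= big1 ?addr0.
  by rewrite /Kop !inE eqxx ps Hpu /= (setD1K us) mulrA csign_sq mul1r.
move=> w /andP[ws wu]; rewrite /Kop !inE (eq_sym u w) wu us /=.
by rewrite andbF mulr0.
Qed.

Lemma idB (f : {set V} -> k) (s : {set V}) : p \in s -> u \notin s -> chainP (u |: s) ->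
  coboundary_map lt (Kop f) s + Kop (coboundary_map lt f) s =
  f s + csign k lt (u |: s) u * csign k lt (u |: s) p * f ((u |: s) :\ p).
Proof.
move=> ps us ch.
have -> : Kop (coboundary_map lt f) s =
  csign k lt (u |: s) u * coboundary_map lt f (u |: s) by rewrite /Kop ps us.
rewrite /coboundary_map [X in _ + _ * X](bigD1 u) ?setU11 //=.
have -> : (u |: s) :\ u = s.
  by apply/setP => z; rewrite !inE; case: (eqVneq z u) => [->|]; rewrite ?(negbTE us).
rewrite mulrDr mulrA csign_sq mul1r.
have -> : \sum_(i in u |: s | i != u) csign k lt (u |: s) i * f ((u |: s) :\ i) =
          \sum_(i in s) csign k lt (u |: s) i * f ((u |: s) :\ i).
  apply: eq_bigl => z; rewrite !inE; case: (eqVneq z u) => [->|_]; rewrite ?(negbTE us) ?andbT //=.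

rewrite (bigD1 p ps) [X in _ + (_ + _ * X)](bigD1 p ps) /=.
rewrite Kop_out ?mulr0 ?add0r; last by rewrite !inE eqxx.
rewrite -mulrA; apply: auxeq.
rewrite big_distrr -big_split /=; apply: big1 => w /andP[ws wp].
have wu : w != u by apply/eqP => e; move: ws; rewrite e; apply/negP.
have ->: Kop f (s :\ w) = csign k lt (u |: (s :\ w)) u * f (u |: (s :\ w)).
  by rewrite /Kop !inE eq_sym wp ps /= eq_sym wu /= (negbTE us).
have uw : u \notin s :\ w by rewrite !inE negb_and us orbT.
have E : (u |: s) :\ w = u |: (s :\ w).
  by apply/setP => z; rewrite !inE; case: (eqVneq z u) => [->|_] /=; rewrite ?(eq_sym u w) ?wu.
rewrite E (@csignU1 (s :\ w) u u uw) (@csignU1 s u u us) (@csignU1 s u w us) lt_irr expr0 !mul1r.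
rewrite (@csignD1 s w u ws).
have : lt u w || lt w u by apply: ch; rewrite ?setU11 // ?(eq_sym u w) // !inE; apply/orP; right.
case h1: (lt u w); case h2: (lt w u) => //= _.
- by case: (lt_asym h1 h2).
- rewrite expr0 expr1; ring.
- rewrite expr0 expr1; ring.
Qed.

Lemma cardU1Z (s : {set V}) x : x \notin s -> (#|x |: s|%:Z = #|s|%:Z + 1)%R.
Proof. by move=> xs; rewrite cardsU1 xs /= add1n -addn1 PoszD. Qed.

Lemma cardUD (s : {set V}) : p \in s -> u \notin s -> #|(u |: s) :\ p| = #|s|.
Proof.
move=> ps us; have := cardsD1 p (u |: s).
rewrite cardsU1 us !inE ps orbT /= add1n => /eqP; rewrite eqSS => /eqP <-.
by [].
Qed.

Lemma step_inj (i : int) (f : {set V} -> k) :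
  is_cocycle lt K1 i f -> is_coboundary lt K2 i f -> is_coboundary lt K1 i f.
Proof.
move=> cf [h Hh].
set f' := fun s => f s - coboundary_map lt h s.
have f'K2 : forall s, s \in K2 -> #|s|%:Z = i + 1 -> f' s = 0.
  by move=> s sK sz; rewrite /f' Hh // subrr.
have key : forall s, s \in K1 -> #|s|%:Z = i + 1 ->
    f' s = coboundary_map lt (Kop f') s.
  move=> s sK sz; case ps: (p \in s); last first.
    by rewrite cobKop_out ?ps // f'K2 // HK2 sK ps.
  case us: (u \in s); first by rewrite idA.
  have s'K := Hcone sK ps.
  have := idB f' ps (negbT us) (HK1ch s'K).
  have -> : Kop (coboundary_map lt f') s = 0.
    rewrite /Kop ps us /= /f' cobB dd0; last exact: HK1ch s'K.
    rewrite cf ?subr0 ?mulr0 //.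
    by rewrite cardU1Z ?us // sz -addrA.
  have -> : f' ((u |: s) :\ p) = 0.
    apply: f'K2; last by rewrite cardUD ?us.
    by rewrite HK2 (HK1sub s'K (subD1set _ _)) !inE eqxx.
  by rewrite addr0 mulr0 addr0 => ->.
exists (fun s => h s + Kop f' s) => s sK sz.
by rewrite cobD -key // /f' addrC subrK.
Qed.

Lemma step_surj (i : int) (g : {set V} -> k) :
  is_cocycle lt K2 i g ->
  exists2 f, is_cocycle lt K1 i f & is_coboundary lt K2 i (fun s => g s - f s).
Proof.
move=> cg.
exists (fun s => g s - coboundary_map lt (Kop g) s - Kop (coboundary_map lt g) s).
  move=> t tK tz; rewrite !cobB dd0; last exact: HK1ch tK.
  rewrite subr0.
  case pt: (p \in t); last first.
    by rewrite cobKop_out ?pt // cg ?subrr // HK2 tK pt.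
  case ut: (u \in t); first by rewrite idA // subrr.
  have t'K := Hcone tK pt.
  have := idB (coboundary_map lt g) pt (negbT ut) (HK1ch t'K).
  have -> : Kop (coboundary_map lt (coboundary_map lt g)) t = 0.
    rewrite /Kop pt ut /= dd0 ?mulr0 //; exact: HK1ch t'K.
  have -> : coboundary_map lt g ((u |: t) :\ p) = 0.
    apply: cg; last by rewrite cardUD ?ut.
    by rewrite HK2 (HK1sub t'K (subD1set _ _)) !inE eqxx.
  by rewrite addr0 mulr0 addr0 => ->; rewrite subrr.
exists (fun _ => 0) => s sK sz.
have ps : p \notin s by move: sK; rewrite HK2 => /andP[].
by rewrite cob0 cobKop_out // Kop_out // !subr0 subrr.
Qed.

End Step.
End Cohom.


Definition IsoC (k : fieldType) (V : finType) (lt : rel V) (K1 K2 : {set {set V}}) :=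
  forall i : int,
  (forall f : {set V} -> k, is_cocycle lt K1 i f -> is_coboundary lt K2 i f ->
     is_coboundary lt K1 i f) /\
  (forall g : {set V} -> k, is_cocycle lt K2 i g ->
     exists2 f, is_cocycle lt K1 i f & is_coboundary lt K2 i (fun s => g s - f s)).

Lemma IsoC_refl (k : fieldType) (V : finType) (lt : rel V) (K : {set {set V}}) :
  IsoC k lt K K.
Proof.
move=> i; split => // g cg; exists g => //; exists (fun _ => 0) => s _ _.
by rewrite subrr /coboundary_map big1 // => v _; rewrite mulr0.
Qed.

Lemma IsoC_trans (k : fieldType) (V : finType) (lt : rel V) (K1 K2 K3 : {set {set V}}) :
  K3 \subset K2 -> K2 \subset K1 -> IsoC k lt K1 K2 -> IsoC k lt K2 K3 -> IsoC k lt K1 K3.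
Proof.
move=> /subsetP s32 /subsetP s21 I12 I23 i; have [i12 s12] := I12 i; have [i23 s23] := I23 i.
split.
  move=> f cf cbf; apply: i12 => //; apply: i23 => // s sK sz.
  by apply: cf => //; apply: s21.
move=> g cg; have [f2 cf2 [e1 He1]] := s23 g cg.
have [f1 cf1 [e2 He2]] := s12 f2 cf2.
exists f1 => //; exists (fun s => e1 s + e2 s) => s sK sz.
rewrite cobD -He1 // -He2 ?s32 //; ring.
Qed.

Lemma ocP (V : finType) (lt : rel V) (S s : {set V}) :
  reflect (s \subset S /\ forall a b, a \in s -> b \in s -> [|| a == b, lt a b | lt b a])
          (s \in order_complex lt S).
Proof.
rewrite inE; apply: (iffP andP) => [[h /forallP H]|[h H]]; split=> //.
  move=> a b ha hb; move: (H a); rewrite ha /= => /forallP /(_ b).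
  by rewrite hb.
apply/forallP => a; apply/implyP => ha; apply/forallP => b; apply/implyP => hb.
exact: H.
Qed.

Lemma cob_lt_eq (k : fieldType) (V : finType) (lt lt' : rel V) (f : {set V} -> k) (s : {set V}) :
  (forall a b, a \in s -> b \in s -> lt a b = lt' a b) ->
  coboundary_map lt f s = coboundary_map lt' f s.
Proof.
move=> H; apply: eq_bigr => v vs; congr (_ * _); rewrite /csign.
congr (_ ^+ _); apply: eq_card => w.
rewrite !inE; case ws: (w \in s) => //=.
exact: H.
Qed.

Section Concrete.
Variables (d : Order.disp_t) (T : finPOrderType d).

Definition lt0 : rel (T + T) := uplus_lt [set: T].
Definition KQ (Q : {set T}) := order_complex lt0 (uplus_ground Q).

Lemma lt0_asym a b : lt0 a b -> lt0 b a -> False.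
Proof.
rewrite /lt0 /uplus_lt; case: a => [x|x]; case: b => [y|y] //=; rewrite ?inE /=;
  by move=> h1 h2; have := lt_trans h1 h2; rewrite ltxx.
Qed.

Lemma uplus_lt_eq (Q : {set T}) a b : a \in uplus_ground Q -> b \in uplus_ground Q ->
  uplus_lt Q a b = lt0 a b.
Proof.
rewrite /lt0 /uplus_lt !inE; case: a => x; case: b => y //= hx hy; by rewrite ?hx ?hy ?inE.
Qed.

Lemma DeltaPuQ_KQ (Q : {set T}) : Delta_PuQ Q = KQ Q.
Proof.
apply/setP => s; apply/ocP/ocP => -[sS H]; split => // a b ha hb;
  have hs := subsetP sS.
  by rewrite -!(uplus_lt_eq (Q:=Q)) ?hs //; apply: H.
by rewrite !(uplus_lt_eq (Q:=Q)) ?hs //; apply: H.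
Qed.

Lemma KQ_sub (Q : {set T}) (s t : {set T + T}) : s \in KQ Q -> t \subset s -> t \in KQ Q.
Proof.
move=> /ocP [sS H] ts; apply/ocP; split; first exact: subset_trans ts sS.
by move=> a b ha hb; apply: H; apply: (subsetP ts).
Qed.

Lemma KQ_chain (Q : {set T}) (s : {set T + T}) : s \in KQ Q -> chainP lt0 s.
Proof.
by move=> /ocP [_ H] a b ha hb ab; move: (H a b ha hb); rewrite (negbTE ab).
Qed.

Lemma KQ_mono (Q1 Q2 : {set T}) : Q2 \subset Q1 -> KQ Q2 \subset KQ Q1.
Proof.
move=> /subsetP h; apply/subsetP => s /ocP [sS H]; apply/ocP; split => //.
apply/subsetP => v /(subsetP sS); rewrite !inE; case: v => // x; exact: h.
Qed.

Lemma exists_max (Q : {set T}) x0 : x0 \in Q ->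
  exists2 x, x \in Q & forall y, y \in Q -> ~~ (x < y)%O.
Proof.
move=> x0Q.
case: (@arg_maxnP T x0 (mem Q) (fun y => #|[set z | (z <= y)%O]|) x0Q) => x xQ xmax.
exists x => // y yQ; apply/negP => xy.
have := xmax y yQ; rewrite /geq /= leqNgt => /negP; apply; apply: proper_card.
rewrite properE; apply/andP; split.
  by apply/subsetP => z; rewrite !inE => zx; exact: le_trans zx (ltW xy).
apply/negP => /subsetP /(_ y); rewrite !inE lexx (lt_geF xy) => /(_ isT) //.
Qed.

Lemma KQ_step (k : fieldType) (Q : {set T}) x : x \in Q ->
  (forall y, y \in Q -> ~~ (x < y)%O) -> IsoC k lt0 (KQ Q) (KQ (Q :\ x)).
Proof.
move=> xQ xmax.
have Hcone : forall s, s \in KQ Q -> inr x \in s -> inl x |: s \in KQ Q.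
  move=> s /ocP [sS H] xs.
  have cmp : forall c, c \in s -> [|| c == inl x, lt0 c (inl x) | lt0 (inl x) c].
    move=> [y|y] cs; have := H _ _ cs xs; rewrite /lt0 /uplus_lt !inE /=.
      case: (eqVneq y x) => [->|nyx] /=; first by rewrite eqxx.
      by move=> h; rewrite [(x < y)%O]lt_neqAle (eq_sym x y) nyx h !orbT.
    have yQ : y \in Q by move: (subsetP sS _ cs); rewrite inE.
    case/or3P => [/eqP [->]|/ltW ->|]; rewrite ?lexx ?orbT //.
    by rewrite (negbTE (xmax y yQ)).
  apply/ocP; split.
    by apply/subsetP => v; rewrite !inE => /orP [/eqP ->|/(subsetP sS)] //; rewrite inE.
  move=> a b; rewrite !inE => /orP [/eqP ->|ha] /orP [/eqP ->|hb]; rewrite ?eqxx //.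
  - by move: (cmp b hb); rewrite eq_sym; case/or3P => ->; rewrite ?orbT.
  - by move: (cmp a ha); case/or3P => ->; rewrite ?orbT.
  - exact: H.
have HK2 : forall s, (s \in KQ (Q :\ x)) = (s \in KQ Q) && (inr x \notin s).
  move=> s; apply/idP/idP.
    move=> sK; rewrite (subsetP (KQ_mono (subD1set Q x)) _ sK) /=.
    move: sK => /ocP [sS _]; apply/negP => /(subsetP sS); by rewrite !inE eqxx.
  case/andP => /ocP [sS H] xs; apply/ocP; split => //.
  apply/subsetP => v vs; move: (subsetP sS _ vs); rewrite !inE; case: v vs => // y ys yQ.
  by rewrite !inE yQ andbT; apply/eqP => e; move: xs; rewrite -e ys.
move=> i; split.
  apply: (@step_inj k _ lt0 lt0_asym (KQ Q) (KQ (Q :\ x)) (inr x) (inl x)) => //.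
    exact: KQ_sub.
  exact: KQ_chain.
apply: (@step_surj k _ lt0 lt0_asym (KQ Q) (KQ (Q :\ x)) (inr x) (inl x)) => //.
  exact: KQ_sub.
exact: KQ_chain.
Qed.


Lemma KQ_iso (k : fieldType) n (Q : {set T}) : #|Q| = n -> IsoC k lt0 (KQ Q) (KQ set0).
Proof.
elim: n Q => [|n IH] Q cQ; first by rewrite (cards0_eq cQ); apply: IsoC_refl.
have : Q != set0 by rewrite -card_gt0 cQ.
case/set0Pn => x0 x0Q; have [x xQ xmax] := exists_max x0Q.
apply: (@IsoC_trans k _ lt0 (KQ Q) (KQ (Q :\ x))).
- exact: KQ_mono (sub0set _).
- exact: KQ_mono (subD1set _ _).
- exact: KQ_step.
- apply: IH; have := cardsD1 x Q; rewrite xQ cQ add1n => -[].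
  by [].
Qed.

Lemma inl_inj : injective (@inl T T).
Proof. by move=> ? ? []. Qed.

Definition linl (A : {set T}) : {set T + T} := [set inl x | x in A].

Lemma mem_inl (A : {set T}) (t : T) : (inl t \in (linl A)) = (t \in A).
Proof. by rewrite /linl mem_imset //; exact: inl_inj. Qed.

Lemma mem_inr (A : {set T}) (t : T) : (inr t \in (linl A)) = false.
Proof. by rewrite /linl; apply/imsetP => -[y _]. Qed.

Definition pre (s : {set T + T}) : {set T} := [set t | inl t \in s].

Lemma preK (A : {set T}) : pre (linl A) = A.
Proof. by apply/setP => t; rewrite inE mem_inl. Qed.

Lemma K0_inl s : s \in KQ set0 -> s = linl (pre s).
Proof.
move=> /ocP [sS _]; apply/setP => [[t|t]]; rewrite ?mem_inl ?mem_inr ?inE //.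
by apply/negP => /(subsetP sS); rewrite !inE.
Qed.

Lemma inlK0 (A : {set T}) : (linl A \in KQ set0) = (A \in Delta_P T).
Proof.
apply/ocP/ocP => -[_ H]; split.
- exact: subsetT.
- move=> a b ha hb; have := H (inl a) (inl b); rewrite !mem_inl => /(_ ha hb).
  by rewrite /lt0 /= (inj_eq inl_inj).
- by rewrite /linl; apply/subsetP => v /imsetP [t _ ->]; rewrite inE.
- rewrite /linl => a b /imsetP [x hx ->] /imsetP [y hy ->]; rewrite /lt0 /= (inj_eq inl_inj).
  exact: H.
Qed.

Lemma card_inl (A : {set T}) : #|(linl A)| = #|A|.
Proof. by rewrite /linl card_imset //; exact: inl_inj. Qed.

Lemma big_linl (k : fieldType) (A : {set T}) (F : T + T -> k) :
  \sum_(v in linl A) F v = \sum_(t in A) F (inl t).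
Proof. by rewrite /linl big_imset //= => ? ? _ _ []. Qed.

Lemma reindex (k : fieldType) (e : {set T + T} -> k) (h : {set T} -> k) (A : {set T}) :
  (forall t, e (linl t) = h t) ->
  coboundary_map lt0 e (linl A) =
  coboundary_map (fun x y : T => (x < y)%O) h A.
Proof.
move=> eh; rewrite /coboundary_map big_linl.
apply: eq_bigr => v vs; congr (_ * _).
  rewrite /csign; congr (_ ^+ _); rewrite -card_inl; apply: eq_card => w.
  case: w => t; rewrite !inE ?mem_inl ?mem_inr //.
  by rewrite inE.
rewrite -eh; congr (e _); apply/setP => -[t|t]; rewrite !inE ?mem_inl ?mem_inr //.
by rewrite !inE (inj_eq inl_inj).
Qed.

Lemma cob_QQ (k : fieldType) (Q : {set T}) (f : {set T + T} -> k) s : s \in KQ Q ->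
  coboundary_map (uplus_lt Q) f s = coboundary_map lt0 f s.
Proof.
move=> /ocP [sS _]; apply: cob_lt_eq => a b ha hb.
by apply: uplus_lt_eq; apply: (subsetP sS).
Qed.

Lemma coh_final (k : fieldType) (Q : {set T}) (i : int) :
  restr_iso_on_cohomology k (fun x y : T => (x < y)%O) (Delta_P T)
       (uplus_lt Q) (Delta_PuQ Q) i.
Proof.
have [Iinj Isurj] := KQ_iso k (erefl #|Q|) i.
rewrite /restr_iso_on_cohomology DeltaPuQ_KQ; split.
  move=> f cf [h Hh].
  have cf0 : is_cocycle lt0 (KQ Q) i f.
    by move=> s sK sz; rewrite -(cob_QQ (Q:=Q)) // cf.
  have cb0 : is_coboundary lt0 (KQ set0) i f.
    exists (fun s => h (pre s)) => s sK sz; rewrite (K0_inl sK).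
    rewrite (reindex (h := h)); last by move=> t; rewrite preK.
    apply: Hh; first by rewrite -inlK0 -K0_inl.
    by rewrite -card_inl -K0_inl.
  have [g Hg] := Iinj f cf0 cb0.
  by exists g => s sK sz; rewrite (cob_QQ (Q:=Q)) // Hg.
move=> g cg.
have cg0 : is_cocycle lt0 (KQ set0) i (fun s => g (pre s)).
  move=> s sK sz; rewrite (K0_inl sK).
  rewrite (reindex (h := g)); last by move=> t; rewrite preK.
  apply: cg; first by rewrite -inlK0 -K0_inl.
  by rewrite -card_inl -K0_inl.
have [f cf [e He]] := Isurj _ cg0.
exists f; first by move=> s sK sz; rewrite (cob_QQ (Q:=Q)) // cf.
exists (fun s => e (linl s)) => t tK tz.
have := He (linl t); rewrite inlK0 card_inl preK => /(_ tK tz) ->.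
by rewrite (reindex (h := fun s => e (linl s))).
Qed.

End Concrete.


Section Lip.
Variable R : realType.

Lemma lip_min (a b c e : R) :
  `|Num.min a c - Num.min b e| <= `|a - b| + `|c - e|.
Proof.
have h1 := ler_norm (a - b); have h2 := ler_norm (b - a); rewrite distrC in h2.
have h3 := ler_norm (c - e); have h4 := ler_norm (e - c); rewrite distrC in h4.
have h5 : 0 <= `|a - b| by [].
have h6 : 0 <= `|c - e| by [].
case: (leP a c) => hac; case: (leP b e) => hbe; rewrite ler_norml; apply/andP; split; lra.
Qed.

Lemma lip_max0 (a b : R) : `|Num.max a 0 - Num.max b 0| <= `|a - b|.
Proof.
have h1 := ler_norm (a - b); have h2 := ler_norm (b - a); rewrite distrC in h2.
case: (leP a 0) => ha; case: (leP b 0) => hb; rewrite ler_norml; apply/andP; split; lra.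
Qed.
End Lip.

Section Homotopy.
Variables (d : Order.disp_t) (T : finPOrderType d) (Q : {set T}) (R : realType).

Definition Mx (X : T + T -> R) (x : T) : R :=
  \sum_(w : T) (if (x < w)%O then X (inr w) else 0).
Definition mv (t : R) (X : T + T -> R) (x : T) : R :=
  Num.min (Num.max (t - Mx X x) 0) (X (inr x)).
Definition Hh (t : R) (X : T + T -> R) : T + T -> R :=
  fun v => match v with inl y => X (inl y) + mv t X y | inr x => X (inr x) - mv t X x end.

Lemma Mx_ge0 X x : (forall v, 0 <= X v) -> 0 <= Mx X x.
Proof. by move=> h; apply: sumr_ge0 => w _; case: ifP. Qed.

Lemma mv_ge0 t X x : (forall v, 0 <= X v) -> 0 <= mv t X x.
Proof. by move=> h; rewrite /mv le_min le_max lexx orbT h. Qed.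

Lemma mv_le t X x : mv t X x <= X (inr x).
Proof. by rewrite /mv ge_min lexx orbT. Qed.

Lemma mv_0 t X x : (forall v, 0 <= X v) -> X (inr x) = 0 -> mv t X x = 0.
Proof.
move=> h e; apply/eqP; rewrite eq_le mv_ge0 // andbT.
by rewrite -e mv_le.
Qed.

Lemma Mx_step X a b : (forall v, 0 <= X v) -> (b < a)%O ->
  Mx X a + X (inr a) <= Mx X b.
Proof.
move=> h ba.
have -> : X (inr a) = \sum_(w : T) (if w == a then X (inr w) else 0).
  by rewrite -big_mkcond big_pred1_eq.
rewrite /Mx -big_split; apply: ler_sum => w _ /=.
case: (eqVneq w a) => [->|nwa]; first by rewrite ltxx ba add0r.
rewrite addr0; case: ifP => aw; first by rewrite (lt_trans ba aw).
by case: ifP.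
Qed.

Lemma Mx_tot X x : (forall v, 0 <= X v) -> \sum_(v : T + T) X v = 1 ->
  Mx X x + X (inr x) <= 1.
Proof.
move=> h s1.
have -> : X (inr x) = \sum_(w : T) (if w == x then X (inr w) else 0).
  by rewrite -big_mkcond big_pred1_eq.
rewrite /Mx -big_split /=; rewrite -s1 big_sumType /=.
apply: le_trans (_ : \sum_(w : T) X (inr w) <= _); last first.
  by rewrite lerDr; apply: sumr_ge0.
apply: ler_sum => w _.
case: (eqVneq w x) => [->|nwx]; first by rewrite ltxx add0r.
by rewrite addr0; case: ifP.
Qed.

Lemma Hh_sum t X : \sum_(v : T + T) Hh t X v = \sum_(v : T + T) X v.
Proof.
rewrite !big_sumType /= big_split /= sumrB /=.
set A := \sum_(i : T) X (inl i); set B := \sum_(i : T) X (inr i).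
set C := \sum_(i : T) mv t X i; ring.
Qed.


Definition rr (v : T + T) : T := match v with inl y => y | inr x => x end.

Lemma ult_rr a b : uplus_lt Q a b -> (rr a <= rr b)%O.
Proof.
case: a => x; case: b => y //=; first by move/ltW.
  by case/andP.
by case/and3P => _ _ /ltW.
Qed.

Lemma supp_chain (X : T + T -> R) : realization (Delta_PuQ Q) X -> forall a b, X a != 0 -> X b != 0 ->
  [|| a == b, uplus_lt Q a b | uplus_lt Q b a].
Proof.
move=> [_ [_ /ocP [_ H]]] a b ha hb; apply: H; by rewrite inE.
Qed.

Lemma supp_ground (X : T + T -> R) v : realization (Delta_PuQ Q) X -> X v != 0 -> v \in uplus_ground Q.
Proof.
by move=> [_ [_ /ocP [sS _]]] hv; apply: (subsetP sS); rewrite inE.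
Qed.

Lemma root_cmp (X : T + T -> R) y1 y2 : realization (Delta_PuQ Q) X -> y1 != y2 ->
  (X (inl y1) != 0) || (X (inr y1) != 0) -> (X (inl y2) != 0) || (X (inr y2) != 0) ->
  (y1 < y2)%O || (y2 < y1)%O.
Proof.
move=> rX ne.
have pick : forall y, (X (inl y) != 0) || (X (inr y) != 0) -> exists2 a, X a != 0 & rr a = y.
  by move=> y /orP [h|h]; [exists (inl y) | exists (inr y)].
move=> /pick [a1 h1 r1] /pick [a2 h2 r2].
case/or3P: (supp_chain rX h1 h2) => [/eqP e|/ult_rr|/ult_rr].
- by move: ne; rewrite -r1 -r2 e eqxx.
- by rewrite r1 r2 lt_neqAle ne => ->.
- by rewrite r1 r2 [(y2 < y1)%O]lt_neqAle eq_sym ne => ->; rewrite orbT.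
Qed.

Lemma Hh_real (t : R) (X : T + T -> R) : 0 <= t <= 1 -> realization (Delta_PuQ Q) X ->
  realization (Delta_PuQ Q) (Hh t X).
Proof.
move=> /andP [t0 t1] rX; have [h0 [s1 sK]] := rX.
have F_inr : forall x, Hh t X (inr x) != 0 -> (X (inr x) != 0) && (mv t X x < X (inr x)).
  move=> x hx; have Xx : X (inr x) != 0.
    by apply: contra hx => /eqP e; rewrite /= e mv_0 // subrr.
  by rewrite Xx lt_neqAle mv_le andbT /=; apply: contra hx => /eqP e; rewrite /= e subrr.
have claim : forall a b, Hh t X (inr a) != 0 -> Hh t X (inl b) != 0 ->
    uplus_lt Q (inr a) (inl b).
  move=> a b ha hb; have /andP [Xa mva] := F_inr a ha.
  have aQ : a \in Q by move: (supp_ground rX Xa); rewrite inE.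
  rewrite /= aQ /=.
  case Xb: (X (inl b) != 0).
    by case/or3P: (supp_chain rX Xa Xb) => //=; rewrite aQ.
  have mvb : mv t X b != 0 by move: hb; rewrite /= (eqP (negbFE Xb)) add0r.
  have Xb' : X (inr b) != 0 by apply: contra mvb => /eqP e; rewrite mv_0.
  case: (eqVneq a b) => [-> //|nab].
  case/or3P: (supp_chain rX Xa Xb') => /=.
  - by rewrite (inj_eq (@inr_inj _ _)) (negbTE nab).
  - by case/and3P => _ _ /ltW.
  case/and3P => _ _ ba.
  have hM := Mx_step h0 ba.
  have mvb0 : 0 < mv t X b by rewrite lt_neqAle eq_sym mvb mv_ge0.
  move: mvb0; rewrite /mv lt_min lt_max ltxx orbF => /andP [tM _].
  have : mv t X a = X (inr a).
    rewrite /mv min_r // le_max; apply/orP; left; lra.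
  by move=> e; move: mva; rewrite e ltxx.
split.
  by case => y /=; [rewrite addr_ge0 ?mv_ge0 | rewrite subr_ge0 mv_le].
split; first by rewrite Hh_sum.
apply/ocP; split.
  apply/subsetP => -[y|x]; rewrite !inE //= => hx.
  by have /andP [Xx _] := F_inr x hx; move: (supp_ground rX Xx); rewrite inE.
move=> a b; rewrite !inE.
case: a => [y1|x1]; case: b => [y2|x2] ha hb.
- case: (eqVneq y1 y2) => [->|ne]; first by rewrite eqxx.
  have root : forall y, Hh t X (inl y) != 0 -> (X (inl y) != 0) || (X (inr y) != 0).
    move=> y hy; case Xy: (X (inl y) != 0) => //=.
    move: hy; rewrite /= (eqP (negbFE Xy)) add0r => hy.
    by apply: contra hy => /eqP e; rewrite mv_0.
  by rewrite /= (root_cmp rX ne (root _ ha) (root _ hb)) orbT.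
- by rewrite (claim _ _ hb ha) !orbT.
- by rewrite (claim _ _ ha hb) orbT.
- have /andP [X1 _] := F_inr _ ha; have /andP [X2 _] := F_inr _ hb.
  by have := supp_chain rX X1 X2.
Qed.


Lemma Hh0 (X : T + T -> R) : realization (Delta_PuQ Q) X -> Hh 0 X = X.
Proof.
move=> [h0 _]; have mv0 : forall y, mv 0 X y = 0.
  move=> y; rewrite /mv max_r; first by rewrite min_l.
  by rewrite sub0r oppr_le0 Mx_ge0.
by apply: functional_extensionality => -[y|y] /=; rewrite mv0 ?addr0 ?subr0.
Qed.

Lemma Hh1 (X : T + T -> R) : realization (Delta_PuQ Q) X ->
  exists2 y, realization (Delta_P T) y & Hh 1 X = incl_real y.
Proof.
move=> rX; have [h0 [s1 sK]] := rX.
have mv1 : forall x, mv 1 X x = X (inr x).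
  move=> x; rewrite /mv min_r // le_max; apply/orP; left.
  have := Mx_tot x h0 s1; lra.
exists (fun t => X (inl t) + X (inr t)); last first.
  by apply: functional_extensionality => -[y|y] /=; rewrite mv1 ?subrr.
split; first by move=> v; rewrite addr_ge0.
split; first by rewrite big_split /= -s1 big_sumType.
apply/ocP; split; first exact: subsetT.
move=> a b; rewrite !inE => ha hb.
have root : forall y, X (inl y) + X (inr y) != 0 -> (X (inl y) != 0) || (X (inr y) != 0).
  move=> y; apply: contraR; rewrite negb_or => /andP [/negPn/eqP -> /negPn/eqP ->].
  by rewrite addr0.
case: (eqVneq a b) => [->|ne] //.
by rewrite (root_cmp rX ne (root _ ha) (root _ hb)).
Qed.

Lemma Hh_fix (t : R) (y : T -> R) : 0 <= t -> Hh t (incl_real y) = incl_real y.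
Proof.
move=> t0; have M0 : forall x, Mx (incl_real y) x = 0.
  by move=> x; apply: big1 => w _; case: ifP.
have mv0 : forall x, mv t (incl_real y) x = 0.
  by move=> x; rewrite /mv M0 subr0 min_r //= le_max lexx orbT.
by apply: functional_extensionality => -[z|z] /=; rewrite mv0 ?addr0 ?subr0.
Qed.

Lemma incl_real_real (y : T -> R) : realization (Delta_P T) y ->
  realization (Delta_PuQ Q) (incl_real y).
Proof.
move=> [h0 [s1 /ocP [_ H]]]; split; first by case.
split; first by rewrite big_sumType /= [X in _ + X]big1 ?addr0.
apply/ocP; split.
  by apply/subsetP => -[t|t]; rewrite !inE //= eqxx.
move=> [a|a] [b|b]; rewrite !inE /= ?eqxx //= => ha hb.
have := H a b; rewrite !inE => /(_ ha hb).
by rewrite (inj_eq (@inl_inj _ _)).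
Qed.

Lemma Hh_cont :
  continuous_on (fun t x => 0 <= t <= 1 /\ realization (Delta_PuQ Q) x) Hh.
Proof.
move=> t X _ e e0.
set n : R := #|T|%:R.
have n0 : 0 <= n by rewrite /n ler0n.
have n3 : 0 < n + 3 by lra.
set dl := e / (n + 3).
have dl0 : 0 < dl by rewrite /dl divr_gt0.
have edl : e = n * dl + 3 * dl.
  by rewrite /dl -mulrDl mulrC divfK // gt_eqF.
exists dl => // s Y _ hst hYX.
have hM : forall x, `|Mx Y x - Mx X x| <= n * dl.
  move=> x; rewrite /Mx -sumrB; apply: le_trans (ler_norm_sum _ _ _) _.
  apply: le_trans (_ : \sum_(w : T) dl <= _).
    apply: ler_sum => z _; case: ifP => _; first exact: ltW (hYX _).
    by rewrite subrr normr0 ltW.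
  by rewrite sumr_const -mulr_natl; apply: lexx.
have hmv : forall x, `|mv s Y x - mv t X x| <=
    `|s - t| + n * dl + `|Y (inr x) - X (inr x)|.
  move=> x; rewrite /mv; apply: le_trans (lip_min _ _ _ _) _.
  have h1 := lip_max0 (s - Mx Y x) (t - Mx X x).
  have h2 := ler_normB (s - t) (Mx Y x - Mx X x).
  have e1 : s - Mx Y x - (t - Mx X x) = (s - t) - (Mx Y x - Mx X x) by ring.
  rewrite e1 in h1.
  have h3 := hM x.
  move: h1 h2 h3; set m := n * dl; lra.
case=> [y|x] /=.
  have -> : Y (inl y) + mv s Y y - (X (inl y) + mv t X y) =
            (Y (inl y) - X (inl y)) + (mv s Y y - mv t X y) by ring.
  apply: le_lt_trans (ler_normD _ _) _.
  have h1 := hYX (inl y); have h2 := hYX (inr y); have h3 := hmv y.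
  move: h1 h2 h3 hst; rewrite edl; set m := n * dl; lra.
have -> : Y (inr x) - mv s Y x - (X (inr x) - mv t X x) =
          (Y (inr x) - X (inr x)) - (mv s Y x - mv t X x) by ring.
apply: le_lt_trans (ler_normB _ _) _.
have h1 := hYX (inr x); have h3 := hmv x.
move: h1 h3 hst; rewrite edl; set m := n * dl; lra.
Qed.

End Homotopy.


Theorem lemma6p5 (d : Order.disp_t) (T : finPOrderType d) (Q : {set T})
  (hQ : poset_ideal Q) :
  (forall R : realType,
     (forall y : T -> R, realization (Delta_P T) y ->
        realization (Delta_PuQ Q) (incl_real y)) /\
     exists H : R -> (T + T -> R) -> (T + T -> R),
       [/\ continuous_on
             (fun t x => 0 <= t <= 1 /\ realization (Delta_PuQ Q) x) H,
           forall t x, 0 <= t <= 1 -> realization (Delta_PuQ Q) x ->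
             realization (Delta_PuQ Q) (H t x),
           forall x, realization (Delta_PuQ Q) x -> H 0 x = x,
           forall x, realization (Delta_PuQ Q) x ->
             exists2 y, realization (Delta_P T) y & H 1 x = incl_real y
         & forall t y, 0 <= t <= 1 -> realization (Delta_P T) y ->
             H t (incl_real y) = incl_real y]) /\
  (forall (k : fieldType) (i : int),
     restr_iso_on_cohomology k (fun x y : T => (x < y)%O) (Delta_P T)
       (uplus_lt Q) (Delta_PuQ Q) i).
Proof.
split; last by move=> k i; exact: coh_final.
move=> R; split; first by move=> y; exact: incl_real_real.
exists (@Hh d T R); split.
- exact: (@Hh_cont d T Q R).
- by move=> t x ht rx; exact: Hh_real.
- by move=> x rx; exact: Hh0 rx.
- by move=> x rx; exact: Hh1 rx.
- by move=> t y /andP [t0 _] _; exact: Hh_fix.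
Qed.
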